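(* Assume $0<\alpha<\sqrt n$ and $e\in\mathbb{R}^n$ satisfies $\|e\|=\sqrt n$. Let $L$ be a linear subspace, and let $\bar x\ne0$ be a point of $M:=(e+L)\cap\partial K_e(\alpha)$. Let $T_{\bar x}$ denote the tangent space to $M$ at $\bar x$, and let $\theta$ be the angle between $\bar x$ and its orthogonal projection onto $T_{\bar x}$. Then the orthogonal projection $P_{L^\perp}(e)$ of $e$ onto $L^\perp$ satisfies \[ \|P_{L^\perp}(e)\|^2=\frac{(n-\alpha^2)\|\bar x\|^2\sin^2\theta}{n-\alpha^2+(\|\bar x\|-\alpha)^2\sin^2\theta}. \]
   Context: $\mathbb{R}^n$ carries the dot product and Euclidean norm. $K_e(\alpha)=\{x:e^Tx\ge\alpha\|x\|\}$, $\partial$ denotes boundary, $e+L=\{e+v:v\in L\}$, $L^\perp$ is the orthogonal complement of $L$. The tangent space to $M$ at $\bar x$ is $T_{\bar x}=\{v\in L:(e^T\bar x)(e^Tv)-\alpha^2\bar x^Tv=0\}$. *)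

(* Defs.v *)
From HB Require Import structures.
From mathcomp Require Import all_boot all_order all_algebra.
From mathcomp Require Import all_classical all_reals all_analysis.
Set Implicit Arguments. Unset Strict Implicit. Unset Printing Implicit Defensive.
Import Order.TTheory GRing.Theory Num.Theory.
Import numFieldNormedType.Exports.
Local Open Scope classical_set_scope.
Local Open Scope ring_scope.

Section Defs.
Variables (R : realType) (n : nat).
Implicit Types (u v w e x : 'rV[R]_n) (S : set 'rV[R]_n).

Definition dotp u v : R := \sum_(i < n) u 0 i * v 0 i.
Definition enorm u : R := Num.sqrt (dotp u u).

Definition Kcone e (alpha : R) : set 'rV[R]_n :=
  [set x | alpha * enorm x <= dotp e x].

Definition bdry S : set 'rV[R]_n := closure S `\` interior S.

Definition orthc (L : {vspace 'rV[R]_n}) : set 'rV[R]_n :=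
  [set v | forall w, w \in L -> dotp v w = 0].

Definition tangent_sp e (alpha : R) (L : {vspace 'rV[R]_n}) xb : set 'rV[R]_n :=
  [set v | v \in L /\ dotp e xb * dotp e v - alpha ^+ 2 * dotp xb v = 0].

Definition is_orth_proj S u p : Prop :=
  S p /\ forall v, S v -> dotp (u - p) v = 0.

(* angle between two vectors, in [0, pi]; with the MathComp convention
   x / 0 = 0 the angle with a zero vector is pi/2 *)
Definition vangle u v : R := acos (dotp u v / (enorm u * enorm v)).

End Defs.

(* Main.v *)
Require Import Defs.
From HB Require Import structures.
From mathcomp Require Import all_boot all_order all_algebra.
From mathcomp Require Import all_classical all_reals all_analysis.
From mathcomp Require Import ring lra.
Import Order.TTheory GRing.Theory Num.Theory.
Import numFieldNormedType.Exports.
Local Open Scope classical_set_scope.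
Local Open Scope ring_scope.
Set Implicit Arguments. Unset Strict Implicit.

Section Aux.
Variables (R : realType) (n : nat).
Implicit Types (u v w : 'rV[R]_n).

Lemma dotpC u v : dotp u v = dotp v u.
Proof. by apply: eq_bigr => i _; rewrite mulrC. Qed.

Lemma dotpDl u v w : dotp (u + v) w = dotp u w + dotp v w.
Proof. by rewrite /dotp -big_split; apply: eq_bigr => i _; rewrite mxE mulrDl. Qed.

Lemma dotpBl u v w : dotp (u - v) w = dotp u w - dotp v w.
Proof. by rewrite /dotp -sumrB; apply: eq_bigr => i _; rewrite !mxE mulrBl. Qed.

Lemma dotpZl k u w : dotp (k *: u) w = k * dotp u w.
Proof. by rewrite /dotp mulr_sumr; apply: eq_bigr => i _; rewrite mxE mulrA. Qed.

Lemma dotpDr u v w : dotp w (u + v) = dotp w u + dotp w v.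
Proof. by rewrite dotpC dotpDl !(dotpC w). Qed.

Lemma dotpBr u v w : dotp w (u - v) = dotp w u - dotp w v.
Proof. by rewrite dotpC dotpBl !(dotpC w). Qed.

Lemma dotpZr k u w : dotp w (k *: u) = k * dotp w u.
Proof. by rewrite dotpC dotpZl dotpC. Qed.

Lemma dotp0l w : dotp 0 w = 0.
Proof. by rewrite /dotp big1 // => i _; rewrite mxE mul0r. Qed.

Lemma dotp0r w : dotp w 0 = 0.
Proof. by rewrite dotpC dotp0l. Qed.

Lemma dotp_ge0 u : 0 <= dotp u u.
Proof. by apply: sumr_ge0 => i _; rewrite -expr2 sqr_ge0. Qed.

Lemma dotp_eq0 u : dotp u u = 0 -> u = 0.
Proof.
move=> h; apply/matrixP => i j; rewrite mxE (ord1 i).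
have hp : forall k : 'I_n, true -> 0 <= u 0 k * u 0 k.
  by move=> k _; rewrite -expr2 sqr_ge0.
have /eqP := (psumr_eq0P hp h) j isT.
by rewrite mulf_eq0 orbb => /eqP.
Qed.

Lemma orth_span (X : seq 'rV[R]_n) w :
  (forall x, x \in X -> dotp w x = 0) -> forall v, v \in <<X>>%VS -> dotp w v = 0.
Proof.
elim: X => [|x X IH] hX v.
  by rewrite span_nil memv0 => /eqP ->; rewrite dotp0r.
rewrite span_cons => /memv_addP [a /vlineP [k ->] [b hb ->]].
rewrite dotpDr dotpZr hX ?mem_head // IH ?hb // ?mulr0 ?add0r // => y hy.
by apply: hX; rewrite in_cons hy orbT.
Qed.

Lemma proj_span (X : seq 'rV[R]_n) u :
  exists a, a \in <<X>>%VS /\ forall v, v \in <<X>>%VS -> dotp (u - a) v = 0.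
Proof.
elim: X u => [|x X IH] u.
  by exists 0; split; [exact: mem0v | move=> v; rewrite span_nil memv0 => /eqP ->; rewrite dotp0r].
have [a1 [ha1 oa1]] := IH u.
have [b [hb ob]] := IH x.
set y := x - b.
have sub : forall z, z \in <<X>>%VS -> z \in <<x :: X>>%VS.
  by move=> z hz; rewrite span_cons; apply: (subvP (addvSr _ _)).
have hy : y \in <<x :: X>>%VS.
  apply: memvB; last exact: sub.
  by apply: memv_span; rewrite in_cons eqxx.
pose t := dotp (u - a1) y / dotp y y.
exists (a1 + t *: y); split; first by apply: memvD; [exact: sub | exact: memvZ].
have key : dotp (u - a1) y - t * dotp y y = 0.
  have [y0|yn0] := eqVneq (dotp y y) 0.
    by rewrite (dotp_eq0 y0) dotp0r dotp0l mulr0 subr0.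
  by rewrite /t mulfVK // subrr.
have oy : forall z, z \in <<X>>%VS -> dotp y z = 0 by move=> z; apply: ob.
move=> v; rewrite span_cons => /memv_addP [c /vlineP [k ->] [w hw ->]].
have -> : k *: x + w = k *: y + (k *: b + w) by rewrite /y scalerBr addrA subrK.
have hbw : k *: b + w \in <<X>>%VS by apply: memvD => //; exact: memvZ.
have e1 := oa1 _ hbw; have e2 := oy _ hbw.
rewrite dotpBl in e1; rewrite dotpBl in key.
rewrite opprD addrA dotpDr !dotpBl !dotpZr !dotpZl e2.
have -> : forall a b c d f : R, k * a - k * b - k * (t * c) + (d - f - t * 0) =
   k * (a - b - t * c) + (d - f) by move=> *; ring.
by rewrite key e1 mulr0 addr0.
Qed.

End Aux.
Section Top.
Variables (R : realType) (n : nat).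

Lemma cont_sum (F : 'I_n -> 'rV[R]_n -> R) :
  (forall i, continuous (F i)) -> continuous (fun x => \sum_(i < n) F i x).
Proof.
move=> hF.
suff H : forall s : seq 'I_n, continuous (fun x => \sum_(i <- s) F i x) by exact: H.
elim=> [|a s IH].
  have -> : (fun x : 'rV[R]_n => \sum_(i <- [::]) F i x) = (fun=> 0).
    by apply/funext => x; rewrite big_nil.
  by move=> x; apply: cvg_cst; exact: nbhs_filter.
have -> : (fun x => \sum_(i <- a :: s) F i x) = F a + (fun x => \sum_(i <- s) F i x).
  by apply/funext => x; rewrite big_cons.
by move=> x; apply: cvgD; [exact: nbhs_filter | exact: hF | exact: IH].
Qed.

Lemma cont_dotp (e : 'rV[R]_n) : continuous (fun x => dotp e x).
Proof.
rewrite /dotp; apply: (@cont_sum (fun i x => e 0 i * x 0 i)) => i x.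
apply: cvgM; [exact: nbhs_filter | (apply: cvg_cst; exact: nbhs_filter) | exact: coord_continuous].
Qed.

Lemma cont_enorm : continuous (fun x : 'rV[R]_n => enorm x).
Proof.
move=> x.
have h : continuous (fun x : 'rV[R]_n => dotp x x).
  rewrite /dotp; apply: (@cont_sum (fun i x => x 0 i * x 0 i)) => i y.
  apply: cvgM; [exact: nbhs_filter | exact: coord_continuous | exact: coord_continuous].
apply: (continuous_comp (h x)); exact: sqrt_continuous.
Qed.

Lemma bdry_eq (e : 'rV[R]_n) alpha xb :
  bdry (Kcone e alpha) xb -> dotp e xb = alpha * enorm xb.
Proof.
move=> [hcl hnint].
pose f x := dotp e x - alpha * enorm x.
have cf : continuous f.
  move=> x; apply: cvgB; [exact: nbhs_filter | exact: cont_dotp | ].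
  apply: cvgM; [exact: nbhs_filter | (apply: cvg_cst; exact: nbhs_filter) | exact: cont_enorm].
case: (ltgtP (dotp e xb) (alpha * enorm xb)) => // h.
- have hlt : f xb < 0 by rewrite /f subr_lt0.
  have nb : nbhs xb [set t | f t < 0] := @cvgr_lt R _ (nbhs xb) (nbhs_filter xb) f (f xb) (cf xb) 0 hlt.
  have [y [Ky fy]] := hcl _ nb.
  move: Ky fy; rewrite /Kcone /f /= => Ky; rewrite subr_lt0; lra.
- have hgt : 0 < f xb by rewrite /f subr_gt0.
  have nb : nbhs xb [set t | 0 < f t] := @cvgr_gt R _ (nbhs xb) (nbhs_filter xb) f (f xb) (cf xb) 0 hgt.
  exfalso; apply: hnint; rewrite /interior /=.
  apply: filterS nb => y /=; rewrite /f subr_gt0 /Kcone /= => hy; lra.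
Qed.

End Top.

Theorem lemma5p3 (R : realType) (n : nat) (alpha : R) (e : 'rV[R]_n)
    (L : {vspace 'rV[R]_n}) (xb : 'rV[R]_n) :
  0 < alpha -> alpha < Num.sqrt (n%:R) ->
  enorm e = Num.sqrt (n%:R) ->
  xb != 0 ->
  xb - e \in L ->
  bdry (Kcone e alpha) xb ->
  forall p : 'rV[R]_n, is_orth_proj (orthc L) e p ->
  forall q : 'rV[R]_n, is_orth_proj (tangent_sp e alpha L xb) xb q ->
  let theta := vangle xb q in
  enorm p ^+ 2 =
    (n%:R - alpha ^+ 2) * enorm xb ^+ 2 * sin theta ^+ 2 /
    (n%:R - alpha ^+ 2 + (enorm xb - alpha) ^+ 2 * sin theta ^+ 2).
Proof.
move=> ha hsq he hxb0 hxbL hbd p [hpL hpo] q [hqT hqo] theta.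
set N : R := n%:R.
have N0 : 0 <= N by rewrite /N ler0n.
have hee : dotp e e = N.
  by rewrite -(sqr_sqrtr (dotp_ge0 e)) -(sqr_sqrtr N0); congr (_ ^+ 2).
set r := enorm xb.
have hxx : dotp xb xb = r ^+ 2 by rewrite /r /enorm sqr_sqrtr // dotp_ge0.
have xx0 : 0 < dotp xb xb.
  rewrite lt_def dotp_ge0 andbT; apply/eqP => /dotp_eq0 h0.
  by rewrite h0 eqxx in hxb0.
have r0 : 0 < r by rewrite /r /enorm sqrtr_gt0.
set k := N - alpha ^+ 2.
have k0 : 0 < k.
  have s2 : Num.sqrt N ^+ 2 = N by rewrite sqr_sqrtr.
  rewrite /k subr_gt0 -s2; nra.
have hc : dotp e xb = alpha * r := bdry_eq hbd.
have spL : <<vbasis L>>%VS = L by case/andP: (vbasisP L) => /eqP.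
have [a [haL hao]] := proj_span (vbasis L) xb.
rewrite spL in haL hao.
have ep : e - p \in L.
  set pp := xb - a.
  have epp : e - pp \in L.
    have -> : e - pp = a - (xb - e) by apply/matrixP => i j; rewrite !mxE; ring.
    exact: memvB.
  have ppo : forall w, w \in L -> dotp pp w = 0 by move=> w hw; exact: hao.
  have hd : orthc L (p - pp).
    by move=> w hw; rewrite dotpBl hpL // ppo // subrr.
  have d0 : dotp (p - pp) (p - pp) = 0.
    have E : p - pp = (e - pp) - (e - p) by apply/matrixP => i j; rewrite !mxE; ring.
    by rewrite {1}E dotpBl dotpC (hd _ epp) hpo // subrr.
  have := dotp_eq0 d0 => /eqP; rewrite subr_eq0 => /eqP ->; exact: epp.
set s := dotp p p.
have pL : forall w, w \in L -> dotp p w = 0 := hpL.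
have hep : dotp e p = s.
  have := pL _ ep; rewrite dotpBr => /eqP; rewrite subr_eq0 => /eqP; by rewrite dotpC.
have hxp : dotp xb p = s.
  have := pL _ hxbL; rewrite dotpBr dotpC [dotp p e]dotpC hep => /eqP; rewrite subr_eq0 => /eqP.
  by rewrite dotpC.
set h := r *: e - alpha *: xb - (r - alpha) *: p.
have hL : h \in L.
  have -> : h = r *: (e - p) - alpha *: ((xb - e) + (e - p)).
    by apply/matrixP => i j; rewrite !mxE; ring.
  by rewrite memvB // memvZ // memvD.
have tcond : forall v, v \in L ->
    dotp e xb * dotp e v - alpha ^+ 2 * dotp xb v = alpha * dotp h v.
  move=> v hv; rewrite /h !dotpBl !dotpZl pL // hc; ring.
have hpv : dotp p h = 0 := pL _ hL.
have xbh : dotp xb h = - ((r - alpha) * s).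
  rewrite /h !dotpBr !dotpZr hxp hxx [dotp xb e]dotpC hc; ring.
set hh := dotp h h.
have hhE : hh = r ^+ 2 * k - (r - alpha) ^+ 2 * s.
  rewrite /hh /h !dotpBl !dotpZl !dotpBr !dotpZr hee hxx hep hxp
     [dotp xb e]dotpC hc [dotp p e]dotpC hep [dotp p xb]dotpC hxp /k -/s; ring.
have hh0 : hh != 0.
  apply/eqP => h0.
  have hz : h = 0 := dotp_eq0 h0.
  move: xbh; rewrite hz dotp0r => /esym/eqP; rewrite oppr_eq0 => /eqP xs.
  move: hhE; rewrite h0.
  have -> : (r - alpha) ^+ 2 * s = (r - alpha) * ((r - alpha) * s) by ring.
  rewrite xs mulr0 subr0 => /esym/eqP; rewrite mulf_eq0 expf_eq0 /= (gt_eqF r0) (gt_eqF k0).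
  done.
set t := dotp xb h / hh.
set q' := (xb - p) - t *: h.
have xpL : xb - p \in L.
  have -> : xb - p = (xb - e) + (e - p) by apply/matrixP => i j; rewrite !mxE; ring.
  by rewrite memvD.
have q'L : q' \in L by rewrite memvB // memvZ.
have hq' : dotp h q' = 0.
  rewrite /q' dotpBr dotpZr dotpBr [dotp h xb]dotpC [dotp h p]dotpC hpv subr0 /t mulfVK //.
  by rewrite subrr.
have qq : q = q'.
  have [qL qc] := hqT.
  have dT : q - q' \in L by rewrite memvB.
  have hd : dotp h (q - q') = 0.
    move: qc; rewrite tcond //.
    move/eqP; rewrite mulf_eq0 (gt_eqF ha) /= => /eqP hq.
    by rewrite dotpBr hq hq' subrr.
  have o1 : dotp (xb - q) (q - q') = 0.
    apply: hqo; split => //; rewrite tcond // hd mulr0 //.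
  have o2 : dotp (xb - q') (q - q') = 0.
    have -> : xb - q' = p + t *: h by apply/matrixP => i j; rewrite !mxE; ring.
    by rewrite dotpDl dotpZl pL // hd mulr0 addr0.
  have : dotp (q - q') (q - q') = 0.
    have E : q - q' = (xb - q') - (xb - q) by apply/matrixP => i j; rewrite !mxE; ring.
    by rewrite {1}E dotpBl o1 o2 subrr.
  by move/dotp_eq0/eqP; rewrite subr_eq0 => /eqP.
have hxq : dotp xb q = dotp q q.
  by have := hqo q hqT; rewrite dotpBl => /eqP; rewrite subr_eq0 => /eqP.
set m := dotp q q.
have m0 : 0 <= m := dotp_ge0 q.
have DE : dotp (xb - q) (xb - q) = r ^+ 2 - m.
  rewrite dotpBl !dotpBr hxx hxq [dotp q xb]dotpC hxq -/m; ring.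
have DE2 : dotp (xb - q) (xb - q) = s + t ^+ 2 * hh.
  have -> : xb - q = p + t *: h by rewrite qq; apply/matrixP => i j; rewrite !mxE; ring.
  rewrite dotpDl !dotpDr !dotpZl !dotpZr hpv [dotp h p]dotpC hpv -/s -/hh; ring.
have D0 : 0 <= r ^+ 2 - m by rewrite -DE dotp_ge0.
set X := dotp xb q / (r * enorm q).
have X2 : X ^+ 2 = m / r ^+ 2.
  rewrite /X hxq /enorm -/m.
  have [->|mn0] := eqVneq m 0; first by rewrite sqrtr0 mulr0 invr0 !mul0r expr0n.
  have sm : Num.sqrt m ^+ 2 = m by rewrite sqr_sqrtr.
  have sm0 : Num.sqrt m != 0 by rewrite sqrtr_eq0 -ltNge lt_def mn0.
  rewrite expr_div_n exprMn sm; field; rewrite mn0 (gt_eqF r0) //.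
have X0 : 0 <= X.
  by rewrite /X hxq divr_ge0 // mulr_ge0 ?(ltW r0) // /enorm sqrtr_ge0.
have X21 : X ^+ 2 <= 1.
  rewrite X2 ler_pdivrMr ?exprn_gt0 // mul1r; lra.
have X1 : X <= 1 by nra.
have sinE : sin theta ^+ 2 = (r ^+ 2 - m) / r ^+ 2.
  rewrite /theta /vangle -/X sin_acos; last by apply/andP; split => //; lra.
  rewrite sqr_sqrtr; last by lra.
  by rewrite X2; field; rewrite ?(gt_eqF r0).
have SE : sin theta ^+ 2 = s * k / hh.
  rewrite sinE -DE DE2 /t xbh.
  move: hh0 hhE; generalize hh => H H0 HE; rewrite HE in H0 *.
  field; rewrite H0 (gt_eqF r0) //.
have -> : enorm p ^+ 2 = s by rewrite /enorm sqr_sqrtr // dotp_ge0.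
rewrite -/N -/k -/r SE.
move: hh0 hhE; generalize hh => H H0 HE.
have E : k + (r - alpha) ^+ 2 * (s * k / H) = k * (r ^+ 2 * k) / H.
  rewrite HE in H0 *; field; exact: H0.
rewrite E; field; rewrite H0 (gt_eqF r0) (gt_eqF k0) //.
Qed.
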